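(* Let $f$ be a tolerance function with $0<f(K)<K$. For given $\mathbf x,\mathbf y$, let $p=\lim_{n\to\infty}P(\mathbf y\in L(\mathbf x))<1$. Then $P(\mathbf y\in I(\mathbf x,f))=0$ holds if $$\lim_{K\to\infty}\frac{f(K)\ln K}{K}<-\ln p.$$ Furthermore, if $p<0.5$, then $P(\mathbf y\in I(\mathbf x,f))=0$ holds as soon as $\lim_{K\to\infty}f(K)/K=0$. Finally, for any such $f$, $\lim_{n\to\infty}P(\mathbf y\in L(\mathbf x))=1$ implies $P(\mathbf y\in I(\mathbf x,f))=1$.
   Context: Setting: $n$ instances form the dataset $\mathcal D=\mathcal D_n$; a forest $\Theta_K$ of $K$ axis-aligned causal trees is built on $\mathcal D$, the trees independent given $\mathcal D$. $L_k(\mathbf x)$ is the leaf of tree $k$ containing $\mathbf x$, $I(\mathbf x,\theta_k)$ its box; $P(\mathbf y\in L(\mathbf x))=P(\mathbf y\in L_k(\mathbf x)\mid\mathcal D)$, same for every $k$, with the events independent across $k$. LILI with $K$ trees under tolerance function $f$: $I(\mathbf x,\Theta_K,f)=\bigcup_{s>K-f(K)}\bigcup_{1\le i_1<\cdots<i_s\le K}\bigcap_{k=1}^sI(\mathbf x,\theta_{i_k})$, i.e. $\mathbf y\in I(\mathbf x,\Theta_K,f)$ iff the number of $k$ with $\mathbf y\in L_k(\mathbf x)$ exceeds $K-f(K)$; $P(\mathbf y\in I(\mathbf x,f)):=\lim_{K\to\infty}\lim_{n\to\infty}P(\mathbf y\in I(\mathbf x,\Theta_K,f)\mid\mathcal D_n)$.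 *)

(* Defs.v *)
From HB Require Import structures.
From mathcomp Require Import all_boot all_order all_algebra.
From mathcomp Require Import all_classical all_reals all_analysis.
Set Implicit Arguments. Unset Strict Implicit. Unset Printing Implicit Defensive.
Import Order.TTheory GRing.Theory Num.Theory.
Import numFieldNormedType.Exports.
Local Open Scope classical_set_scope.
Local Open Scope ring_scope.

Definition mutually_independent_events d (T : measurableType d) (R : realType)
    (P : probability T R) (K : nat) (A : 'I_K -> set T) : Prop :=
  (forall k, measurable (A k)) /\
  forall J : {set 'I_K},
    P (\bigcap_(k in [set k | k \in J]) A k) = (\prod_(k in J) P (A k))%E.

(* Number of trees k < K whose leaf L_k(x) contains y (event A k). *)
Definition leaf_count (T : Type) (K : nat) (A : 'I_K -> set T) (w : T) : nat :=
  (\sum_(k < K) `[< A k w >])%N.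

(* The event  y \in I(x, Theta_K, f): the number of k with y \in L_k(x)
   exceeds K - f(K). *)
Definition lili_event (R : realType) (T : Type) (f : nat -> R) (K : nat)
    (A : 'I_K -> set T) : set T :=
  [set w | K%:R - f K < (leaf_count A w)%:R].

(* Main.v *)
From HB Require Import structures.
From mathcomp Require Import all_boot all_order all_algebra.
From mathcomp Require Import all_classical all_reals all_analysis.
From mathcomp Require Import ring lra.
Set Implicit Arguments. Unset Strict Implicit. Unset Printing Implicit Defensive.
Import Order.TTheory GRing.Theory Num.Theory.
Import numFieldNormedType.Exports.
Require Import Defs.
Local Open Scope classical_set_scope.
Local Open Scope ring_scope.

Lemma bigsetI_mem (T : Type) (I : eqType) (r : seq I) (Pr : pred I) (F : I -> set T) t :
  (\big[setI/setT]_(i <- r | Pr i) F i) t <-> (forall i, i \in r -> Pr i -> F i t).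
Proof.
elim: r => [|a r IH]; first by rewrite big_nil; split => // _ i; rewrite in_nil.
rewrite big_cons; case: ifP => Pa.
- split.
  + move=> [Fa /IH H] i; rewrite inE => /orP[/eqP->|ir] Pi //; exact: H.
  + by move=> H; split; [apply: H; rewrite ?inE ?eqxx | apply/IH => i ir; apply: H; rewrite inE ir orbT].
- split.
  + move=> /IH H i; rewrite inE => /orP[/eqP->|ir] Pi; [by rewrite Pa in Pi | exact: H].
  + by move=> H; apply/IH => i ir; apply: H; rewrite inE ir orbT.
Qed.

Lemma bigsetU_mem (T : Type) (I : eqType) (r : seq I) (Pr : pred I) (F : I -> set T) t :
  (\big[setU/set0]_(i <- r | Pr i) F i) t <-> (exists i, [/\ i \in r, Pr i & F i t]).
Proof.
elim: r => [|a r IH]; first by rewrite big_nil; split => // -[i []]; rewrite in_nil.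
rewrite big_cons; case: ifP => Pa.
- split.
  + move=> [Fa|/IH [i [ir Pi Fi]]]; first by exists a; split => //; rewrite inE eqxx.
    by exists i; split => //; rewrite inE ir orbT.
  + move=> [i []]; rewrite inE => /orP[/eqP->|ir] Pi Fi; first by left.
    by right; apply/IH; exists i.
- split.
  + by move=> /IH [i [ir Pi Fi]]; exists i; split => //; rewrite inE ir orbT.
  + move=> [i []]; rewrite inE => /orP[/eqP ai|ir] Pi Fi; first by subst; rewrite Pa in Pi.
    by apply/IH; exists i.
Qed.

Section Prob.
Context d (T : measurableType d) (R : realType) (P : probability T R)
  (K : nat) (A : 'I_K -> set T) (x : R).
Hypothesis mA : forall k, measurable (A k).
Hypothesis indep : forall J : {set 'I_K},
    P (\bigcap_(k in [set k | k \in J]) A k) = (\prod_(k in J) P (A k))%E.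
Hypothesis PA : forall k, P (A k) = x%:E.

Definition hb (b : bool) : R := if b then x else 1 - x.

Definition pat (B : {set 'I_K}) (w : {ffun 'I_K -> bool}) : set T :=
  [set t | forall k, k \in B -> (A k t <-> w k)].

Lemma pat_meas B w : measurable (pat B w).
Proof.
have -> : pat B w = \big[setI/setT]_(k <- enum 'I_K | k \in B)
    (if w k then A k else ~` A k).
  apply/seteqP; split => t /=.
  - move=> H; apply/bigsetI_mem => k _ kB; have := H k kB.
    by case: (w k) => -[h1 h2] //=; [exact: h2| move=> /h1].
  - move=> /bigsetI_mem H k kB; have := H k (mem_enum _ _) kB.
    by case: (w k) => /= h; split.
apply: bigsetI_measurable => k _; case: (w k) => //; exact/measurableC.
Qed.

Lemma pat_prob n : forall (B : {set 'I_K}) (w : {ffun 'I_K -> bool}), #|[set k in B | ~~ w k]| = n ->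
  P (pat B w) = (\prod_(k in B) hb (w k))%:E.
Proof.
elim: n => [|n IH] B w.
- move=> /eqP; rewrite cards_eq0 => /eqP H0.
  have wT : forall k, k \in B -> w k.
    move=> k kB; apply/negPn/negP => nw.
    have : k \in [set k in B | ~~ w k] by rewrite inE kB nw.
    by rewrite H0 inE.
  have -> : pat B w = \bigcap_(k in [set k | k \in B]) A k.
    apply/seteqP; split => t /=.
    + by move=> H k kB; apply/(H k kB); exact: wT.
    + by move=> H k kB; split => // _; [exact: wT | exact: H].
  rewrite indep (eq_bigr (fun k => x%:E)); last by move=> k _; exact: PA.
  rewrite prodEFin; congr EFin; apply: eq_bigr => k kB.
  by rewrite /hb wT.
- move=> Hc.
  have [k] : exists k, k \in [set k in B | ~~ w k].
    by apply/card_gt0P; rewrite Hc.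
  rewrite inE => /andP[kB nwk].
  pose w' : {ffun 'I_K -> bool} := [ffun i => (i == k) || w i].
  have c1 : #|[set i in B :\ k | ~~ w i]| = n.
    have -> : [set i in B :\ k | ~~ w i] = [set i in B | ~~ w i] :\ k.
      by apply/setP => i; rewrite !inE; case: (i == k).
    by move: Hc; rewrite (cardsD1 k) inE kB nwk /= => -[].
  have c2 : #|[set i in B | ~~ w' i]| = n.
    have -> : [set i in B | ~~ w' i] = [set i in B | ~~ w i] :\ k.
      by apply/setP => i; rewrite !inE ffunE; case: (i == k) => //=; rewrite andbC.
    by move: Hc; rewrite (cardsD1 k) inE kB nwk /= => -[].
  have e1 : pat B w = pat (B :\ k) w `\` A k.
    apply/seteqP; split => t /=.
    + move=> H; split.
      * by move=> i; rewrite !inE => /andP[_ iB]; exact: H.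
      * by move=> /(H k kB) wk; rewrite wk in nwk.
    + move=> [H nA] i iB; have [->|ik] := eqVneq i k.
        by rewrite (negbTE nwk); split.
      by apply: H; rewrite !inE ik.
  have e2 : pat B w' = pat (B :\ k) w `&` A k.
    apply/seteqP; split => t /=.
    + move=> H; split.
      * move=> i; rewrite !inE => /andP[ik iB]; have := H i iB.
        by rewrite ffunE (negbTE ik).
      * by apply/(H k kB); rewrite ffunE eqxx.
    + move=> [H Ak] i iB; rewrite ffunE; have [->|ik] := eqVneq i k.
        by split.
      by apply: H; rewrite !inE ik.
  rewrite e1 measureD; last 3 first.
  + exact: pat_meas.
  + exact: mA.
  + by rewrite ltey_eq fin_num_measure //; exact: pat_meas.
  rewrite -e2.
  transitivity ((\prod_(i in B :\ k) hb (w i))%:E - (\prod_(i in B) hb (w' i))%:E)%E.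
    by congr (_ - _)%E; [exact: (IH _ _ c1) | exact: (IH _ _ c2)].
  rewrite -EFinB; congr EFin.
  rewrite (big_setD1 k kB) [in RHS](big_setD1 k kB).
  have -> : \prod_(i in B :\ k) hb (w' i) = \prod_(i in B :\ k) hb (w i).
    by apply: eq_bigr => i; rewrite !inE => /andP[ik _]; rewrite ffunE (negbTE ik).
  by rewrite /hb ffunE eqxx /= (negbTE nwk) mulrBl mul1r.
Qed.

Definition cntw (w : {ffun 'I_K -> bool}) : nat := (\sum_(k < K) w k)%N.
Definition Gsum (Q : pred nat) : R :=
  \sum_(w : {ffun 'I_K -> bool} | Q (cntw w)) \prod_(k < K) hb (w k).

Lemma count_prob (Q : pred nat) :
  P [set t | Q (leaf_count A t)] = (Gsum Q)%:E.
Proof.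
pose Pr := fun i : 'I_#|{: {ffun 'I_K -> bool}}| => Q (cntw (enum_val i)).
have eqS : [set t | Q (leaf_count A t)] =
    \big[setU/set0]_(i < #|{: {ffun 'I_K -> bool}}| | Pr i) pat (finset.setT : {set 'I_K}) (enum_val i).
  apply/seteqP; split => t /=.
  - move=> Qt; apply/bigsetU_mem.
    pose wt : {ffun 'I_K -> bool} := [ffun k => `[< A k t >]].
    have cw : cntw wt = leaf_count A t.
      by rewrite /cntw /leaf_count; apply: eq_bigr => k _; rewrite ffunE.
    exists (enum_rank wt); split; first by rewrite mem_index_enum.
      by rewrite /Pr enum_rankK cw.
    by rewrite enum_rankK => k _; rewrite ffunE; split => [/asboolP|/asboolP].
  - move=> /bigsetU_mem [i [_ Pi Hi]].
    suff <- : cntw (enum_val i) = leaf_count A t by [].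
    rewrite /cntw /leaf_count; apply: eq_bigr => k _.
    have := Hi k (finset.in_setT k); case: (enum_val i k) => -[h1 h2].
      by rewrite asboolT //; apply: h2.
    by rewrite asboolF // => /h1.
rewrite eqS measure_bigsetU_ord_cond; last 2 first.
- by move=> i _; exact: pat_meas.
- move=> i j _ _ [t [Hi Hj]]; apply: enum_val_inj; apply/ffunP => k.
  have := Hi k (finset.in_setT k); have := Hj k (finset.in_setT k).
  by case: (enum_val i k); case: (enum_val j k) => // -[h1 h2] [h3 h4];
    [have := h1 (h4 isT) | have := h3 (h2 isT)].
rewrite (eq_bigr (fun i : 'I_#|{: {ffun 'I_K -> bool}}| => (\prod_(k < K) hb ((enum_val i : {ffun 'I_K -> bool}) k))%:E)); last first.
  move=> i _; apply: etrans; first exact: (@pat_prob _ (finset.setT : {set 'I_K}) (enum_val i) erefl).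
  congr EFin.
  by apply: eq_bigl => k; rewrite finset.in_setT.
rewrite sumEFin /Gsum; congr EFin.
rewrite (big_enum_val_cond (A := {: {ffun 'I_K -> bool}})).
done.
Qed.
End Prob.

Section Anal.
Context (R : realType).

Lemma cvg_bsum (I : Type) (s : seq I) (Pr : pred I) (F : I -> nat -> R) (l : I -> R) :
  (forall i, F i n @[n --> \oo] --> l i) ->
  (\sum_(i <- s | Pr i) F i n) @[n --> \oo] --> \sum_(i <- s | Pr i) l i.
Proof.
move=> HF; elim: s => [|a s IH].
  rewrite big_nil.
  have -> : (fun n => \sum_(i <- [::] | Pr i) F i n) = (fun=> 0) by apply/funext => n; rewrite big_nil.
  exact: cvg_cst.
rewrite big_cons.
have -> : (fun n => \sum_(i <- a :: s | Pr i) F i n) =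
  (fun n => if Pr a then GRing.add (F a n) (\sum_(i <- s | Pr i) F i n) else \sum_(i <- s | Pr i) F i n).
  by apply/funext => n; rewrite big_cons.
case: (Pr a) => //; exact: cvgD.
Qed.

Lemma cvg_bprod (I : Type) (s : seq I) (Pr : pred I) (F : I -> nat -> R) (l : I -> R) :
  (forall i, F i n @[n --> \oo] --> l i) ->
  (\prod_(i <- s | Pr i) F i n) @[n --> \oo] --> \prod_(i <- s | Pr i) l i.
Proof.
move=> HF; elim: s => [|a s IH].
  rewrite big_nil.
  have -> : (fun n => \prod_(i <- [::] | Pr i) F i n) = (fun=> 1) by apply/funext => n; rewrite big_nil.
  exact: cvg_cst.
rewrite big_cons.
have -> : (fun n => \prod_(i <- a :: s | Pr i) F i n) =
  (fun n => if Pr a then GRing.mul (F a n) (\prod_(i <- s | Pr i) F i n) else \prod_(i <- s | Pr i) F i n).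
  by apply/funext => n; rewrite big_cons.
case: (Pr a) => //; exact: cvgM.
Qed.

Lemma cvg_Gsum K (u : nat -> R) (p : R) (Q : pred nat) :
  u n @[n --> \oo] --> p -> Gsum K (u n) Q @[n --> \oo] --> Gsum K p Q.
Proof.
move=> up; apply: cvg_bsum => w; apply: cvg_bprod => k.
rewrite /hb; case: (w k) => //; apply: cvgB => //; exact: cvg_cst.
Qed.

Lemma cntw_card K (w : {ffun 'I_K -> bool}) :
  cntw w = #|[pred k | w k]|.
Proof.
rewrite /cntw -sum1_card [RHS]big_mkcond /=; apply: eq_bigr => k _.
by rewrite inE; case: (w k).
Qed.

Lemma Gsum_ge0 K (x : R) (Q : pred nat) : 0 <= x <= 1 -> 0 <= Gsum K x Q.
Proof.
move=> /andP[x0 x1]; apply: sumr_ge0 => w _; apply: prodr_ge0 => k _.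
by rewrite /hb; case: (w k) => //; rewrite subr_ge0.
Qed.

Lemma Gsum_bound K (x : R) (Q : pred nat) (m : R) : 0 <= x <= 1 ->
  (forall c, (c <= K)%N -> Q c -> (K - c)%:R < m) ->
  Gsum K x Q <= expR (m * ln 2) * ((1 + x) / 2) ^+ K.
Proof.
move=> /andP[x0 x1] HQ.
pose hb' := fun b : bool => if b then x else (1 - x) / 2.
have hb'0 : forall b, 0 <= hb' b.
  by case => //=; rewrite divr_ge0 // subr_ge0.
have E0 : 0 <= expR (m * ln 2) by rewrite expR_ge0.
apply: (@le_trans _ _ (\sum_(w : {ffun 'I_K -> bool} | Q (cntw w))
          expR (m * ln 2) * \prod_(k < K) hb' (w k))).
  apply: ler_sum => w Qw.
  have -> : \prod_(k < K) hb x (w k) =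
      \prod_(k < K) hb' (w k) * \prod_(k < K) (if ~~ w k then 2 else 1).
    rewrite -big_split /=; apply: eq_bigr => k _; rewrite /hb /hb'.
    by case: (w k) => /=; rewrite ?mulr1 // divfK // pnatr_eq0.
  rewrite mulrC ler_wpM2r //; first by apply: prodr_ge0 => k _.
  rewrite -big_mkcond /= prodr_const.
  set c := #|_|.
  have cK : c = (K - cntw w)%N.
    rewrite cntw_card; have hC := cardC [pred k | w k]; rewrite card_ord in hC.
    have -> : c = #|[predC [pred k | w k]]| by apply: eq_card => k; rewrite !inE.
    have hle : (#|[pred k | w k]| <= K)%N by apply: (leq_trans _ (eq_leq hC)); exact: leq_addr.
    by apply/eqP; rewrite -(eqn_add2l #|[pred k | w k]|) subnKC // hC.
  have cle : (cntw w <= K)%N.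
    by rewrite cntw_card; have hC := cardC [pred k | w k]; rewrite card_ord in hC; apply: (leq_trans _ (eq_leq hC)); exact: leq_addr.
  have cm := HQ _ cle Qw; rewrite -cK in cm.
  have -> : (2:R) ^+ c = expR (c%:R * ln 2) by rewrite expRM_natl lnK // posrE.
  rewrite ler_expR.
  by rewrite ler_wpM2r // ?ln_ge0 ?ler1n // ltW.
rewrite -mulr_sumr ler_wpM2l //.
apply: (@le_trans _ _ (\sum_(w : {ffun 'I_K -> bool}) \prod_(k < K) hb' (w k))).
  rewrite [leRHS](bigID (fun w => Q (cntw w))) /= lerDl.
  by apply: sumr_ge0 => w _; apply: prodr_ge0.
rewrite -(bigA_distr_bigA (fun (_ : 'I_K) (b : bool) => hb' b)) /=.
rewrite prodr_const card_ord big_bool /hb' /=.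
rewrite le_eqVlt; apply/orP; left; apply/eqP; congr (_ ^+ _); by field.
Qed.

Lemma Gsum_one K (Q : pred nat) : Q K -> Gsum K (1 : R) Q = 1.
Proof.
move=> QK; pose wT : {ffun 'I_K -> bool} := [ffun => true].
have cT : cntw wT = K.
  rewrite cntw_card; apply: etrans (card_ord K); apply: eq_card => k.
  by rewrite !inE ffunE.
rewrite /Gsum (bigD1 wT) /=; last by rewrite cT.
rewrite [X in _ + X]big1.
  by rewrite addr0; apply: big1 => k _; rewrite /hb ffunE.
move=> w /andP[_ nw].
have [k wk] : exists k, ~~ w k.
  apply/existsP; apply: contraR nw => /existsPn H; apply/eqP/ffunP => k.
  by rewrite ffunE; have := H k; rewrite negbK.
by rewrite (bigD1 k) //= /hb (negbTE wk) subrr mul0r.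
Qed.

End Anal.

Lemma core_zero (R : realType) (f : nat -> R) (p : R) :
  0 <= p -> p < 1 -> (forall K, (0 < K)%N -> 0 < f K < K%:R) ->
  (fun K : nat => f K / K%:R) @ \oo --> 0 ->
  (fun K : nat => Gsum K p (fun c : nat => K%:R - f K < c%:R)) @ \oo --> (0 : R).
Proof.
move=> p0 p1 Hf Hr.
pose a := (1 + p) / 2.
have a0 : 0 < a by rewrite /a; lra.
have a1 : a < 1 by rewrite /a; lra.
pose L := ln a.
have L0 : L < 0 by apply: ln_lt0; rewrite a0 a1.
have ln20 : 0 < ln (2:R) by rewrite ln_gt0 // ltr1n.
pose b := expR (L / 2).
have b1 : `|b| < 1.
  by rewrite ger0_norm ?expR_ge0 // expR_lt1; lra.
pose eps := - L / (2 * ln 2).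
have e0 : 0 < eps by rewrite /eps divr_gt0 // ?oppr_gt0 // mulr_gt0.
apply: (squeeze_cvgr (f := fun=> 0) (h := fun K => b ^+ K)); last 2 first.
- exact: cvg_cst.
- exact: cvg_expr.
have /cvgrPdist_lt /(_ eps e0) Hn := Hr.
near=> K.
have HK : (0 < K)%N by near: K; exact: nbhs_infty_gt.
have fK : `|0 - f K / K%:R| < eps by near: K; exact: Hn.
apply/andP; split.
  by apply: Gsum_ge0; rewrite p0 ltW.
apply: le_trans.
  apply: (@Gsum_bound _ K p _ (f K)); first by rewrite p0 ltW.
  by move=> c cK /= Qc; rewrite natrB //; lra.
have K0 : 0 < (K%:R : R) by rewrite ltr0n.
have fK' : f K < eps * K%:R.
  rewrite -ltr_pdivrMr //; apply: le_lt_trans fK.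
  by rewrite sub0r normrN ler_norm.
have h : f K * ln 2 <= - (K%:R * L) / 2.
  apply: ltW; apply: lt_le_trans (_ : eps * K%:R * ln 2 <= _).
    by rewrite ltr_pM2r.
  rewrite /eps le_eqVlt; apply/orP; left; apply/eqP; field.
  by rewrite gt_eqF.
have -> : a ^+ K = expR (K%:R * L) by rewrite expRM_natl lnK // posrE.
rewrite /b -expRM_natl -expRD ler_expR.
lra.
Unshelve. all: by end_near.
Qed.

Lemma inv_ln_cvg (R : realType) :
  (fun K : nat => (ln (K%:R : R))^-1) @ \oo --> (0 : R).
Proof.
apply/cvgrPdist_lt => e e0; near=> K.
have HK : expR (e^-1) < (K%:R : R) by near: K; exact: nbhs_infty_gtr.
have Kp : 0 < (K%:R : R) by apply: lt_trans HK; exact: expR_gt0.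
have lnpos : e^-1 < ln (K%:R : R).
  by rewrite -[e^-1]expRK ltr_ln // posrE expR_gt0.
have lK : 0 < ln (K%:R : R) by apply: lt_trans lnpos; rewrite invr_gt0.
rewrite sub0r normrN ger0_norm; last by rewrite invr_ge0 ltW.
by rewrite -[ltRHS]invrK ltf_pV2 ?posrE ?invr_gt0.
Unshelve. all: by end_near.
Qed.

Lemma ratio_cvg (R : realType) (f : nat -> R) (l : R) :
  (fun K : nat => f K * ln (K%:R : R) / K%:R) @ \oo --> l ->
  (fun K : nat => f K / K%:R) @ \oo --> (0 : R).
Proof.
move=> Hl; rewrite -(mulr0 l).
suff E : \forall K \near \oo, ((fun K : nat => f K * ln (K%:R : R) / K%:R) \* (fun K : nat => (ln (K%:R : R))^-1)) K = f K / K%:R.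
  apply: (cvg_trans _ (cvgM Hl (@inv_ln_cvg R))).
  by apply: near_eq_cvg; near=> K; rewrite (near E).
near=> K.
have K2 : (1 < K)%N by near: K; exact: nbhs_infty_gt.
have lK : 0 < ln (K%:R : R) by rewrite ln_gt0 // ltr1n.
have K0 : 0 < (K%:R : R) by rewrite ltr0n; apply: ltn_trans K2.
rewrite /=; field; rewrite ?gt_eqF //.
Unshelve. all: by end_near.
Qed.

Unset Implicit Arguments.

Theorem mainTheorem13
  (R : realType) (d : measure_display)
  (T : nat -> nat -> measurableType d)
  (P : forall n K : nat, probability (T n K) R)
  (A : forall n K : nat, 'I_K -> set (T n K))
  (pL : nat -> R) (p : R) (f : nat -> R) :
  (* tolerance function with 0 < f(K) < K *)
  (forall K : nat, (0 < K)%N -> 0 < f K < K%:R) ->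
  (* given D_n, the K events {y in L_k(x)} are mutually independent *)
  (forall n K : nat, mutually_independent_events (P n K) (A n K)) ->
  (* each with the same probability P(y in L(x)) = pL n *)
  (forall (n K : nat) (k : 'I_K), P n K (A n K k) = (pL n)%:E) ->
  (* p = lim_n P(y in L(x)) *)
  pL @ \oo --> p ->
  [/\
   (* part 1 *)
   (p < 1 ->
    (exists l : R,
       (fun K : nat => f K * ln K%:R / K%:R) @ \oo --> l /\
       (p = 0 \/ l < - ln p)) ->
    exists q : nat -> R,
      (forall K : nat,
         (fun n : nat => fine (P n K (lili_event f (A n K)))) @ \oo --> q K) /\
      q @ \oo --> (0 : R)),
   (* part 2 *)
   (p < 2^-1 ->
    (fun K : nat => f K / K%:R) @ \oo --> 0 ->
    exists q : nat -> R,
      (forall K : nat,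
         (fun n : nat => fine (P n K (lili_event f (A n K)))) @ \oo --> q K) /\
      q @ \oo --> (0 : R))
   &
   (* part 3 *)
   (p = 1 ->
    exists q : nat -> R,
      (forall K : nat,
         (fun n : nat => fine (P n K (lili_event f (A n K)))) @ \oo --> q K) /\
      q @ \oo --> (1 : R))].
Proof.
move=> Hf Hind HP Hp.
pose Q := fun K => fun c : nat => K%:R - f K < (c%:R : R).
have key : forall n K, fine (P n K (lili_event f (A n K))) = Gsum K (pL n) (Q K).
  move=> n K; have [mA indep] := Hind n K.
  apply: (@etrans _ _ (fine (Gsum K (pL n) (Q K))%:E)) => //.
  congr fine; exact: (count_prob mA indep (HP n K) (Q K)).
have pL01 : forall n, 0 <= pL n <= 1.
  move=> n; have [mA _] := Hind n 1%N.
  have e := HP n 1%N ord0.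
  have h0 : (0 <= (pL n)%:E)%E by rewrite -e; exact: measure_ge0.
  have h1 : ((pL n)%:E <= 1)%E by rewrite -e; exact: probability_le1.
  by move: h0 h1; rewrite !lee_fin => -> ->.
have p0 : 0 <= p.
  apply: (ler_cvg_to (cvg_cst 0) Hp); apply: nearW => n.
  by case/andP: (pL01 n).
have p1 : p <= 1.
  apply: (ler_cvg_to Hp (cvg_cst (1:R))); apply: nearW => n.
  by case/andP: (pL01 n).
pose q := fun K => Gsum K p (Q K).
have Hq : forall K, (fun n => fine (P n K (lili_event f (A n K)))) @ \oo --> q K.
  move=> K.
  have -> : (fun n => fine (P n K (lili_event f (A n K)))) =
            (fun n => Gsum K (pL n) (Q K)) by apply/funext => n; exact: key.
  exact: cvg_Gsum.
split.
- move=> plt1 [l [Hl _]]; exists q; split => //.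
  exact: (core_zero p0 plt1 Hf (ratio_cvg Hl)).
- move=> plt Hr; exists q; split => //.
  have plt1 : p < 1.
    by apply: (lt_trans plt); rewrite invf_lt1 // ltr1n.
  exact: (core_zero p0 plt1 Hf Hr).
- move=> pe; exists q; split => //.
  suff E : \forall K \near \oo, (fun=> (1:R)) K = q (K : nat).
    apply: (cvg_trans _ (@cvg_cst _ (1:R) nat \oo _)).
    by apply: near_eq_cvg; exact: E.
  apply: filterS (nbhs_infty_gt 0) => K HK /=.
  rewrite /q pe Gsum_one // /Q.
  by have /andP[fK0 _] := Hf K HK; rewrite ltrBlDr ltrDl.
Qed.
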